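(* Let $\Delta'\ge 3$ be an integer and let $G\in\mathcal{G}_{\Delta'}$. For $i\in\{1,\dots,\Delta'\}$ define $$d_i=\frac{1}{i+1}+(i-1)!\Big(\frac{1}{e}-\sum_{j=0}^{i+1}\frac{(-1)^j}{j!}\Big)\ \text{ if $i$ is even},\qquad d_i=\frac{1}{i+1}+(i-1)!\Big(\sum_{j=0}^{i+1}\frac{(-1)^j}{j!}-\frac{1}{e}\Big)\ \text{ if $i$ is odd},$$ where $e$ is Euler's number. Then $$\alpha(G)\ge \sum_{i=1}^{\Delta'} d_i|V_i(G)|.$$ Moreover, $d_1=1-\frac{1}{e}$ and $d_{i+1}=1-id_i$ for $i=1,\dots,\Delta'-1$.
   Context: All graphs are simple, finite and undirected. For an integer $D\ge 3$, $\mathcal{G}_{D}$ denotes the set of connected graphs $G\neq K_{D+1}$ with maximum degree $D$. For a graph $G$ and $i\ge 1$, $V_i(G)$ is the set of vertices of $G$ of degree $i$. $\alpha(G)$ is the independence number of $G$. *)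

(* Defs.v *)
From HB Require Import structures.
From mathcomp Require Import all_boot all_order all_algebra.
From mathcomp Require Import all_classical all_reals all_analysis.
Set Implicit Arguments. Unset Strict Implicit. Unset Printing Implicit Defensive.
Import Order.TTheory GRing.Theory Num.Theory.

Definition simple_graph (T : finType) (e : rel T) : Prop :=
  symmetric e /\ irreflexive e.

Definition deg (T : finType) (e : rel T) (x : T) : nat := #|[set y | e x y]|.

Definition connected_graph (T : finType) (e : rel T) : Prop :=
  forall x y : T, connect e x y.

Definition max_degree_eq (T : finType) (e : rel T) (D : nat) : Prop :=
  (forall x, deg e x <= D) /\ (exists x, deg e x = D).

Definition is_complete_graph (T : finType) (e : rel T) (n : nat) : Prop :=
  #|T| = n /\ (forall x y : T, x != y -> e x y).

Definition in_GD (T : finType) (e : rel T) (D : nat) : Prop :=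
  simple_graph e /\ connected_graph e /\ max_degree_eq e D /\
  ~ is_complete_graph e D.+1.

Definition V_ (T : finType) (e : rel T) (i : nat) : {set T} :=
  [set x | deg e x == i].

Definition independent (T : finType) (e : rel T) (S : {set T}) : bool :=
  [forall x in S, forall y in S, ~~ e x y].

Definition alpha (T : finType) (e : rel T) : nat :=
  \max_(S : {set T} | independent e S) #|S|.

Local Open Scope ring_scope.

Definition dcoef (R : realType) (i : nat) : R :=
  let s := \sum_(0 <= j < i.+2) ((-1) ^+ j / (j`!)%:R) in
  (i.+1%:R)^-1 +
  ((i.-1)`!)%:R * (if ~~ odd i then (expR 1)^-1 - s else s - (expR 1)^-1).

(* Main.v *)
Require Import Defs.
From HB Require Import structures.
From mathcomp Require Import all_boot all_order all_algebra.
From mathcomp Require Import all_classical all_reals all_analysis.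
From mathcomp Require Import ring lra.
Import Order.TTheory GRing.Theory Num.Theory.
Import numFieldNormedType.Exports.
Local Open Scope ring_scope.

Section Analytic.
Variable R : realType.

Definition Ssum (n : nat) : R := \sum_(0 <= j < n) ((-1) ^+ j / (j`!)%:R).

Lemma fact_pos n : (0 : R) < (n`!)%:R.
Proof. by rewrite ltr0n fact_gt0. Qed.

Lemma alt_tail n m :
  0 <= (-1)^+n * \sum_(n <= j < n + m) ((-1) ^+ j / (j`!)%:R :> R)
  <= ((n`!)%:R)^-1.
Proof.
elim: m n => [|m IH] n.
  by rewrite addn0 big_geq // mulr0 lexx /= invr_ge0 ler0n.
rewrite big_ltn; last by rewrite addnS ltnS leq_addr.
have := IH n.+1; rewrite addSnnS exprS.
set X := \sum_(_ <= _ < _) _; set s := (-1) ^+ n.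
have s2 : s * s = 1 by rewrite /s -expr2 -exprM mulnC exprM sqrrN !expr1n.
have hf : ((n.+1)`!%:R)^-1 <= ((n`!)%:R)^-1 :> R.
  by rewrite lef_pV2 ?posrE ?fact_pos // ler_nat factS leq_pmull.
move=> /andP[h1 h2]; rewrite mulrDr mulrA s2 mul1r.
rewrite -mulrA mulN1r in h1 h2.
apply/andP; split; [|lra].
have : 0 <= ((n`!)%:R)^-1 - ((n.+1)`!%:R)^-1 :> R by lra.
lra.
Qed.

Definition Einv : R := (expR 1)^-1.

Lemma series_split n m : (n <= m)%N ->
  series (exp_coeff (-1 : R)) m = Ssum n + \sum_(n <= j < m) ((-1) ^+ j / (j`!)%:R).
Proof.
move=> nm; rewrite /series /= /Ssum (big_cat_nat (leq0n n) nm) /=.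
by [].
Qed.

Lemma tail_nonneg n : 0 <= (-1)^+n * (Einv - Ssum n).
Proof.
have E : Einv = limn (series (exp_coeff (-1 : R))) by rewrite /Einv -expRN.
have tl m : (n <= m)%N -> 0 <= (-1)^+n * \sum_(n <= j < m) ((-1) ^+ j / (j`!)%:R :> R).
  by move=> nm; have /andP[] := alt_tail n (m - n); rewrite subnKC.
rewrite -signr_odd in tl *; case: (odd n) tl => /= tl.
  rewrite mulN1r oppr_ge0 subr_le0 E; apply: limr_le; first exact: is_cvg_series_exp_coeff.
  near=> m; have nm : (n <= m)%N by near: m; exact: nbhs_infty_ge.
  rewrite (@series_split n m nm); have := tl m nm; rewrite mulN1r oppr_ge0 => h; lra.
rewrite mul1r subr_ge0 E; apply: limr_ge; first exact: is_cvg_series_exp_coeff.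
near=> m; have nm : (n <= m)%N by near: m; exact: nbhs_infty_ge.
rewrite (@series_split n m nm); have := tl m nm; rewrite mul1r => h; lra.
Unshelve. all: by end_near.
Qed.

Definition tt i := (-1)^+i * (Einv - Ssum i.+2).

Lemma sign2 i : ((-1) ^+ i : R) * (-1) ^+ i = 1.
Proof. by rewrite -expr2 -exprM mulnC exprM sqrrN !expr1n. Qed.

Lemma tt_ge0 i : 0 <= tt i.
Proof. by have := tail_nonneg i.+2; rewrite /tt !exprS !mulN1r opprK. Qed.

Lemma Ssum_S n : Ssum n.+1 = Ssum n + (-1)^+n / (n`!)%:R.
Proof. by rewrite /Ssum big_nat_recr. Qed.

Lemma tt_rec i : tt i + tt i.+1 = ((i.+2)`!%:R)^-1.
Proof.
rewrite /tt (Ssum_S i.+2) !exprS !mulN1r.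
set s := (-1) ^+ i; set S := Ssum _; set f := (_`!)%:R.
have s2 : s * s = 1 by exact: sign2.
rewrite opprD mulNr !mulrDr !mulrN !opprK mulrA s2 mul1r; lra.
Qed.

Lemma dcoefE i : dcoef R i = (i.+1%:R)^-1 + (i.-1)`!%:R * tt i.
Proof.
rewrite /dcoef /tt -signr_odd -/(Ssum i.+2) -/Einv.
by case: (odd i) => /=; rewrite ?mul1r ?mulN1r ?opprB.
Qed.


Lemma factS3 n : ((n.+3)`!%:R : R) = (n.+3)%:R * (n.+2)%:R * (n.+1)%:R * (n`!)%:R.
Proof. by rewrite !factS !natrM !mulrA. Qed.

Lemma r_bounds n : 
  0 <= (n`!)%:R * tt n.+1 /\
  (n`!)%:R * tt n.+1 * ((n.+1)%:R * ((n.+1)%:R + 1) * ((n.+1)%:R + 2)) <= 1 /\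
  1 <= (n`!)%:R * tt n.+1 * ((n.+1)%:R * ((n.+1)%:R + 1) * ((n.+1)%:R + 3)) :> R.
Proof.
have F0 := fact_pos n.
have t0 := tt_ge0 n.+1; have t1 := tt_ge0 n.+2; have t2 := tt_ge0 n.+3.
have e1 := tt_rec n.+1; have e2 := tt_rec n.+2.
have hF3 := factS3 n.
have hF4 : ((n.+4)`!%:R : R) = (n.+4)%:R * (n.+3)`!%:R by rewrite factS natrM.
have xe : (n.+1)%:R + 1 = (n.+2)%:R :> R by rewrite natr1.
have xe2 : (n.+1)%:R + 2 = (n.+3)%:R :> R by rewrite -natrD addn2.
have xe3 : (n.+1)%:R + 3 = (n.+4)%:R :> R by rewrite -natrD addn3.
rewrite xe xe2 xe3.
set F := (n`!)%:R; set T := tt n.+1.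
set F3 : R := ((n.+3)`!)%:R in hF3 e1 hF4.
set F4 : R := ((n.+4)`!)%:R in hF4 e2.
have F3p : 0 < F3 by exact: fact_pos.
have F4p : 0 < F4 by exact: fact_pos.
have h1 : T * F3 <= 1.
  have : T <= F3^-1 by move: e1 t1; rewrite -/T; lra.
  by rewrite -(ler_pM2r F3p) mulVf ?gt_eqF.
have h2 : F4 * F3^-1 - 1 <= T * F4.
  have : F3^-1 - F4^-1 <= T by move: e1 e2 t2; rewrite -/T; lra.
  by rewrite -(ler_pM2r F4p) mulrBl mulVf ?gt_eqF // mulrC.
have F4e : F4 * F3^-1 = (n.+4)%:R by rewrite hF4 mulfK // gt_eqF.
rewrite F4e in h2.
split; first by rewrite mulr_ge0 // ltW.
split.
  suff -> : F * T * (n.+1%:R * n.+2%:R * n.+3%:R) = T * F3 by [].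
  by rewrite hF3 /F; ring.
have : (n.+3)%:R <= T * F4 by rewrite -[(n.+4)%:R]natr1 in h2; lra.
rewrite hF4 hF3 => h.
have x0 : 0 < (n.+3)%:R :> R by rewrite ltr0n.
rewrite -(ler_pM2r x0) mul1r.
suff <- : T * (n.+4%:R * (n.+3%:R * n.+2%:R * n.+1%:R * n`!%:R)) = 
  F * T * (n.+1%:R * n.+2%:R * n.+4%:R) * n.+3%:R by [].
by rewrite /F; ring.
Qed.


Lemma d_rec i : (1 <= i)%N -> dcoef R i.+1 = 1 - i%:R * dcoef R i.
Proof.
case: i => // n _.
rewrite !dcoefE /=.
have e := tt_rec n.+1.
have -> : tt n.+2 = ((n.+3)`!%:R)^-1 - tt n.+1 by rewrite -e; ring.
rewrite factS3 factS natrM.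
have F0 := fact_pos n.
set F := (n`!)%:R; set T := tt n.+1.
have h1 : (n.+1)%:R != 0 :> R by rewrite pnatr_eq0.
have h2 : (n.+2)%:R != 0 :> R by rewrite pnatr_eq0.
have h3 : (n.+3)%:R != 0 :> R by rewrite pnatr_eq0.
have h0 : F != 0 by rewrite gt_eqF.
rewrite -[(n.+2)%:R]natr1 -[(n.+3)%:R]natr1 -[(n.+2)%:R]natr1 in h2 h3 *.
field.
have n0 : 0 <= n%:R :> R := ler0n _ _.
apply/and4P; split; rewrite ?h0 // gt_eqF //; lra.
Qed.


Lemma d_form n : dcoef R n.+1 * ((n.+1)%:R + 1) =
  1 + (n`!)%:R * tt n.+1 * ((n.+1)%:R + 1).
Proof.
rewrite dcoefE /= natr1 mulrDl mulVf ?pnatr_eq0 //.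
Qed.

Lemma d_ge0 i : (1 <= i)%N -> 0 <= dcoef R i.
Proof.
case: i => // n _; rewrite dcoefE addr_ge0 ?invr_ge0 ?ler0n //.
by case: (r_bounds n).
Qed.

Lemma d_step n : dcoef R n.+2 <= dcoef R n.+1.
Proof.
rewrite (@d_rec n.+1) //; have := d_form n; case: (r_bounds n) => + _.
set d := dcoef R n.+1; set r := _ * tt _; set x := (n.+1)%:R.
have x0 : 0 <= x by rewrite ler0n.
move=> r0 h; nra.
Qed.

Lemma d_mono i j : (1 <= i)%N -> (i <= j)%N -> dcoef R j <= dcoef R i.
Proof.
move=> i1; elim: j => [|j IH]; first by rewrite leqn0 => /eqP ->.
rewrite leq_eqVlt => /orP[/eqP -> //|]; rewrite ltnS => ij.
apply: le_trans (IH ij); case: j IH ij => [|j] IH ij.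
  by move: i1; rewrite leqn0 in ij; rewrite (eqP ij).
exact: d_step.
Qed.

Lemma d_one : dcoef R 1 = 1 - (expR 1)^-1.
Proof.
rewrite /dcoef /= !big_nat_recr //= big_geq //=.
rewrite (_ : 2`! = 2)%N // (_ : 1`! = 1)%N // fact0.
by field.
Qed.


Lemma d_sum m : m%:R * dcoef R m + dcoef R m.+1 <= 1.
Proof.
case: m => [|m].
  rewrite mul0r add0r d_one; have := expR_gt0 (1 : R).
  by move=> h; rewrite lerBlDr lerDl invr_ge0 ltW.
by rewrite (@d_rec m.+1) //; lra.
Qed.

Lemma d_Q k : (1 <= k)%N -> dcoef R k - dcoef R k.+1 <= dcoef R k.+1.
Proof.
case: k => // n _; rewrite (@d_rec n.+1) //.
have := d_form n; case: (r_bounds n) => + [+ _].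
set d := dcoef R n.+1; set r := _ * tt _; set x := (n.+1)%:R.
have x1 : 1 <= x by rewrite ler1n.
move=> r0 rb h.
have h2 : (2 * x + 1) * (d * (x + 1)) <= 2 * (x + 1).
  rewrite h.
  have : (2 * x + 1) * (r * (x + 1)) <= r * (x * (x + 1) * (x + 2)).
    have : 0 <= r * (x + 1) by nra.
    nra.
  nra.
have : (2 * x + 1) * d <= 2.
  have xp : 0 < x + 1 by lra.
  rewrite -(ler_pM2r xp); nra.
nra.
Qed.

Lemma d_conv k : (2 <= k)%N -> dcoef R k - dcoef R k.+1 <= dcoef R k.-1 - dcoef R k.
Proof.
case: k => [|[|n]] // _ /=.
rewrite (@d_rec n.+2) // (@d_rec n.+1) //.
have := d_form n; case: (r_bounds n) => + [_ +].
set d := dcoef R n.+1; set r := _ * tt _; set x := (n.+1)%:R.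
have x1 : 1 <= x by rewrite ler1n.
have -> : (n.+2)%:R = x + 1 by rewrite /x natr1.
move=> r0 rb h.
have h2 : (x + 1) * (x + 2) <= (x * x + 3 * x + 1) * (d * (x + 1)).
  rewrite h.
  have : r * (x * (x + 1) * (x + 3)) <= (x * x + 3 * x + 1) * (r * (x + 1)).
    have : 0 <= r * (x + 1) by nra.
    nra.
  nra.
have : x + 2 <= (x * x + 3 * x + 1) * d.
  have xp : 0 < x + 1 by lra.
  rewrite -(ler_pM2r xp); nra.
nra.
Qed.

End Analytic.

From mathcomp Require Import fintype finset bigop fingraph.

Set Implicit Arguments. Unset Strict Implicit. Unset Printing Implicit Defensive.
Local Notation fsubsetP := fintype.subsetP.

Section Graph.
Variables (R : realType) (T : finType) (e : rel T).
Hypothesis hsym : symmetric e.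
Hypothesis eirr : irreflexive e.
Implicit Types (U W S : {set T}) (x y z v w : T).

Definition Nb (U : {set T}) x := [set y in U | e x y].
Definition dg U x := #|Nb U x|.
Definition NC U x := x |: Nb U x.
Definition cc U x := [forall y in Nb U x, NC U y == NC U x].
Definition gw U x : R := if cc U x then ((dg U x).+1%:R)^-1 else dcoef R (dg U x).
Definition indU (U S : {set T}) := (S \subset U) && independent e S.
Definition aU (U : {set T}) := \max_(S in indU U) #|S|.

Lemma inNb U x y : (y \in Nb U x) = (y \in U) && e x y.
Proof. by rewrite inE. Qed.

Lemma Nb_sub U x : Nb U x \subset U.
Proof. by apply/fsubsetP => y; rewrite inNb => /andP[]. Qed.

Lemma notin_Nb U x : x \notin Nb U x.
Proof. by rewrite inNb eirr andbF. Qed.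

Lemma card_NC U x : #|NC U x| = (dg U x).+1.
Proof. by rewrite /NC cardsU1 notin_Nb. Qed.

Lemma NC_sub U x : x \in U -> NC U x \subset U.
Proof. by move=> xU; rewrite subUset sub1set xU Nb_sub. Qed.

Lemma inNC U x y : (y \in NC U x) = (y == x) || (y \in Nb U x).
Proof. by rewrite !inE. Qed.

Lemma inNC_sym U x y : x \in U -> y \in U -> (y \in NC U x) = (x \in NC U y).
Proof.
move=> xU yU; rewrite !inNC !inNb xU yU /= hsym.
by case: eqVneq => [->|]; rewrite ?eqxx // eq_sym => ->.
Qed.

Lemma cc_NC U x y : cc U x -> y \in NC U x -> NC U y = NC U x.
Proof.
move=> /forall_inP H; rewrite inNC => /orP[/eqP -> //|yN].
exact/eqP/H.
Qed.

Lemma cc_cc U x y : cc U x -> y \in NC U x -> cc U y.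
Proof.
move=> ccx yN; have eyx := cc_NC ccx yN.
apply/forall_inP => z zN.
have zN' : z \in NC U x by rewrite -eyx inNC zN orbT.
by rewrite (cc_NC ccx zN') eyx.
Qed.

Lemma cc_dg U x y : cc U x -> y \in NC U x -> dg U y = dg U x.
Proof. by move=> ccx yN; apply: succn_inj; rewrite -!card_NC (cc_NC ccx yN). Qed.

Lemma NC_in U x y : x \in U -> y \in NC U x -> y \in U.
Proof. by move=> xU /(fsubsetP (NC_sub xU)). Qed.

Lemma aU_step U v : v \in U -> ((aU (U :\: NC U v)).+1 <= aU U)%N.
Proof.
move=> vU; rewrite /aU.
have [|S SW ->] := @eq_bigmax_cond _ (indU (U :\: NC U v)) (fun S => #|S|).
  apply/card_gt0P; exists set0; rewrite unfold_in /indU sub0set /=.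
  by apply/forall_inP => x; rewrite inE.
move: SW; rewrite /indU => /andP[SW /forall_inP Sind].
have vS : v \notin S.
  by apply/negP => /(fsubsetP SW); rewrite !inE eqxx.
have -> : (#|S|.+1 = #|v |: S|)%N by rewrite cardsU1 vS.
apply: (leq_bigmax_cond (v |: S)); rewrite unfold_in.
rewrite /indU subUset sub1set vU (subset_trans SW (subsetDl _ _)) /=.
apply/forall_inP => x xS; apply/forall_inP => y yS.
have nev z : z \in S -> ~~ e v z.
  move=> zS; have := fsubsetP SW z zS; rewrite !inE negb_or => /andP[/andP[_ ]].
  by move=> H zU; apply: contra H => ->; rewrite zU.
move: xS yS; rewrite !inE => /orP[/eqP->|xS'] /orP[/eqP->|yS'].
- by rewrite eirr.
- exact: nev.
- by rewrite hsym nev.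
- by have := Sind x xS' => /forall_inP /(_ y yS').
Qed.


Lemma Nb_closed U W : W \subset U ->
  (forall x y, x \in W -> y \in U -> e x y -> y \in W) ->
  forall x, x \in W -> Nb W x = Nb U x.
Proof.
move=> WU cl x xW; apply/setP => y; rewrite !inNb.
case yW: (y \in W); first by rewrite (fsubsetP WU y yW).
case yU: (y \in U) => //=; apply/esym/negbTE/negP => exy.
by have := cl _ _ xW yU exy; rewrite yW.
Qed.

Lemma gw_closed U W : W \subset U ->
  (forall x y, x \in W -> y \in U -> e x y -> y \in W) ->
  forall x, x \in W -> gw W x = gw U x.
Proof.
move=> WU cl x xW; rewrite /gw /dg /cc (Nb_closed WU cl xW).
have -> : [forall y in Nb U x, NC W y == NC W x] = [forall y in Nb U x, NC U y == NC U x].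
  apply: eq_forallb_in => y; rewrite inNb => /andP[yU exy].
  have yW : y \in W by exact: cl exy.
  by rewrite /NC (Nb_closed WU cl xW) (Nb_closed WU cl yW).
by [].
Qed.

Lemma caseA U v : v \in U -> cc U v ->
  \sum_(x in U) gw U x = 1 + \sum_(x in U :\: NC U v) gw (U :\: NC U v) x.
Proof.
move=> vU ccv.
rewrite (big_setID (NC U v)) /= (setIidPr (NC_sub vU)).
congr (_ + _).
  rewrite (eq_bigr (fun _ => ((dg U v).+1%:R)^-1)); last first.
    by move=> x xN; rewrite /gw (cc_cc ccv xN) (cc_dg ccv xN).
  by rewrite sumr_const card_NC -[in RHS](mulVf (x := (dg U v).+1%:R)) ?pnatr_eq0 // mulr_natr.
apply: eq_bigr => x xW; apply/esym/gw_closed => //; first exact: subsetDl.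
move=> a b aW bU eab; rewrite in_setD bU andbT; apply/negP => bN.
move: aW; rewrite in_setD => /andP[/negP aN aU]; apply: aN.
by rewrite -(cc_NC ccv bN) inNC inNb aU hsym eab orbT.
Qed.


Definition avgF W (F : T -> R) x : R :=
  if cc W x then (#|NC W x|%:R)^-1 * \sum_(y in NC W x) F y else F x.

Lemma avg W (F : T -> R) : \sum_(x in W) F x = \sum_(x in W) avgF W F x.
Proof.
rewrite (bigID (fun x => cc W x)) [RHS](bigID (fun x => cc W x)) /=.
congr (_ + _); last by apply: eq_bigr => x /andP[_ /negbTE]; rewrite /avgF => ->.
rewrite [RHS](eq_bigr (fun x => \sum_(y | (y \in W) && cc W y && (x \in NC W y))
    (#|NC W y|%:R)^-1 * F y)); last first.
  move=> x /andP[xW ccx]; rewrite /avgF ccx mulr_sumr.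
  apply: eq_big => y.
    case yN: (y \in NC W x).
      have yW := NC_in xW yN.
      by rewrite yW (cc_cc ccx yN) -(inNC_sym xW yW) yN.
    apply/esym/negbTE/negP => /andP[/andP[yW _]].
    by rewrite -(inNC_sym xW yW) yN.
  by move=> yN; rewrite (cc_NC ccx yN).
rewrite (exchange_big_dep (fun y => (y \in W) && cc W y)) /=; last by move=> x y _ /andP[].
apply: eq_bigr => y /andP[yW ccy].
rewrite (eq_bigl (fun x => x \in NC W y)); last first.
  move=> x; rewrite yW ccy /=; case xN: (x \in NC W y); rewrite ?andbF ?andbT //.
  by rewrite (NC_in yW xN) (cc_cc ccy xN).
by rewrite sumr_const -mulrnAl -mulr_natr mulVf ?mul1r // card_NC pnatr_eq0.
Qed.


Lemma dg_pos U x : ~~ cc U x -> (0 < dg U x)%N.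
Proof.
apply: contraR; rewrite lt0n negbK => /eqP/cards0_eq H.
by rewrite /cc H; apply/forall_inP => y; rewrite in_set0.
Qed.

Lemma Nb_mono U W x : W \subset U -> Nb W x \subset Nb U x.
Proof.
move=> WU; apply/fsubsetP => y; rewrite !inNb => /andP[yW ->].
by rewrite (fsubsetP WU y yW).
Qed.

Lemma dg_mono U W x : W \subset U -> (dg W x <= dg U x)%N.
Proof. by move=> WU; apply/subset_leq_card/Nb_mono. Qed.

Lemma dg_lt U W x y : W \subset U -> y \in Nb U x -> y \notin W -> (dg W x < dg U x)%N.
Proof.
move=> WU yN yW; apply/proper_card/properP; split; first exact: Nb_mono.
exists y => //; by rewrite inNb (negbTE yW).
Qed.

Definition noCC U := forall x, x \in U -> ~~ cc U x.

Definition FU U x : R := dcoef R (dg U x).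

Lemma gw_noCC U x : noCC U -> x \in U -> gw U x = FU U x.
Proof. by move=> H xU; rewrite /gw (negbTE (H x xU)). Qed.

Lemma cc_witness U W x : W \subset U -> noCC U -> x \in W -> cc W x ->
  exists2 y0, y0 \in NC W x & (dg W y0 < dg U y0)%N.
Proof.
move=> WU nc xW ccx.
case: (boolP [exists y0 in NC W x, (dg W y0 < dg U y0)%N]).
  by move=> /exists_inP[y0 ? ?]; exists y0.
move=> /exists_inP H; exfalso.
have xU : x \in U by exact: fsubsetP WU x xW.
have eqN y : y \in NC W x -> Nb W y = Nb U y.
  move=> yC; apply/eqP; rewrite eqEcard Nb_mono //=.
  by rewrite leqNgt; apply/negP => lt; apply: H; exists y.
have := nc x xU; rewrite /cc -(eqN x) ?inNC ?eqxx //.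
move/negP; apply; apply/forall_inP => y yN.
have yC : y \in NC W x by rewrite inNC yN orbT.
by rewrite /NC -(eqN y yC) -(eqN x) ?inNC ?eqxx //; apply: (forall_inP ccx).
Qed.

Lemma hle U W x : W \subset U -> noCC U -> x \in W ->
  avgF W (FU U) x <= gw W x.
Proof.
move=> WU nc xW.
have xU : x \in U by exact: fsubsetP WU x xW.
rewrite /avgF /gw; case: ifP => ccx; last first.
  rewrite /FU; apply: d_mono; last exact: dg_mono.
  by apply: dg_pos; rewrite ccx.
have [y0 y0C lt0] := cc_witness WU nc xW ccx.
set m := dg W x.
have dy0 : dg W y0 = m by exact: cc_dg.
rewrite card_NC -/m.
have hS : \sum_(y in NC W x) FU U y <= 1.
  rewrite (big_setD1 y0 y0C) /=.
  have h1 : FU U y0 <= dcoef R m.+1.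
    by rewrite /FU; apply: d_mono => //; rewrite -dy0.
  have h2 : \sum_(y in NC W x :\ y0) FU U y <= m%:R * dcoef R (maxn 1 m).
    apply: (@le_trans _ _ (\sum_(y in NC W x :\ y0) dcoef R (maxn 1 m))).
      apply: ler_sum => y /setD1P [_ yC].
      have yU : y \in U by apply: (fsubsetP WU); exact: NC_in yC.
      rewrite /FU; apply: d_mono; first exact: leq_maxl.
      rewrite geq_max (dg_pos (nc y yU)) /= /m -(cc_dg ccx yC); exact: dg_mono.
    have cm : #|NC W x :\ y0| = m.
      by have := cardsD1 y0 (NC W x); rewrite y0C card_NC -/m add1n => /succn_inj.
    by rewrite sumr_const cm mulr_natl.
  have h3 : m%:R * dcoef R (maxn 1 m) + dcoef R m.+1 <= 1.
    case: m {dy0 h1 h2} => [|m]; first by rewrite mul0r add0r; have := d_sum R 0; rewrite mul0r add0r.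
    by rewrite (maxn_idPr _) //; exact: d_sum.
  lra.
by rewrite -[X in _ <= X]mulr1 ler_wpM2l // invr_ge0 ler0n.
Qed.


Lemma stepB U w (del : R) : w \in U -> noCC U ->
  \sum_(y in NC U w) FU U y <= 1 + del ->
  del <= \sum_(x in U :\: NC U w) (gw (U :\: NC U w) x - avgF (U :\: NC U w) (FU U) x) ->
  \sum_(x in U) gw U x <= 1 + \sum_(x in U :\: NC U w) gw (U :\: NC U w) x.
Proof.
move=> wU nc h1 h2.
rewrite (eq_bigr (FU U)); last by move=> x xU; exact: gw_noCC.
rewrite (big_setID (NC U w)) /= (setIidPr (NC_sub wU)) (avg (U :\: NC U w)).
rewrite sumrB in h2. lra.
Qed.

Lemma gain_ge0 U W S : W \subset U -> noCC U -> S \subset W ->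
  \sum_(x in S) (gw W x - avgF W (FU U) x) <=
  \sum_(x in W) (gw W x - avgF W (FU U) x).
Proof.
move=> WU nc SW; rewrite [X in _ <= X](big_setID S) /= (setIidPr SW) lerDl.
apply: sumr_ge0 => x /setDP[xW _]; rewrite subr_ge0; exact: hle.
Qed.

Lemma nonreg U w y k : noCC U -> w \in U -> dg U w = k ->
  (forall x, x \in U -> k <= dg U x)%N -> y \in Nb U w -> (k < dg U y)%N ->
  \sum_(z in NC U w) FU U z <= 1.
Proof.
move=> nc wU dw kmin yN lty.
have k1 : (1 <= k)%N by rewrite -dw; apply: dg_pos; exact: nc.
rewrite /NC big_setU1 ?notin_Nb //= (big_setD1 y yN) /=.
have h1 : FU U w = dcoef R k by rewrite /FU dw.
have h2 : FU U y <= dcoef R k.+1 by rewrite /FU; apply: d_mono.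
have h3 : \sum_(z in Nb U w :\ y) FU U z <= (k.-1)%:R * dcoef R k.
  apply: (@le_trans _ _ (\sum_(z in Nb U w :\ y) dcoef R k)).
    apply: ler_sum => z /setD1P [_ zN]; rewrite /FU; apply: d_mono => //.
    by apply: kmin; move: zN; rewrite inNb => /andP[].
  have cm : #|Nb U w :\ y| = k.-1.
    by have := cardsD1 y (Nb U w); rewrite yN -/(dg U w) dw add1n => ->.
  by rewrite sumr_const cm mulr_natl.
have h4 := d_sum R k.
have h5 : k%:R = (k.-1)%:R + 1 :> R by rewrite natr1 prednK.
rewrite h5 in h4; lra.
Qed.

Lemma NC_bound U v k : (forall x, x \in U -> k <= dg U x)%N -> (1 <= k)%N -> v \in U ->
  dg U v = k -> \sum_(y in NC U v) FU U y <= 1 + (dcoef R k - dcoef R k.+1).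
Proof.
move=> kmin k1 vU dv.
apply: (@le_trans _ _ (\sum_(y in NC U v) dcoef R k)).
  apply: ler_sum => y yN; rewrite /FU; apply: d_mono => //; apply: kmin.
  exact: NC_in yN.
rewrite sumr_const card_NC dv -mulr_natl (@d_rec R k k1) -natr1; lra.
Qed.


Lemma reg_gain U v y z k : noCC U -> v \in U -> dg U v = k ->
  (forall x, x \in U -> k <= dg U x)%N -> y \in Nb U v -> z \in Nb U y ->
  z \notin NC U v -> dg U z = k ->
  dcoef R k - dcoef R k.+1 <=
  \sum_(x in U :\: NC U v) (gw (U :\: NC U v) x - avgF (U :\: NC U v) (FU U) x).
Proof.
move=> nc vU dv kmin yN zN znot dz.
set W := U :\: NC U v.
have WU : W \subset U by exact: subsetDl.
have zU : z \in U by move: zN; rewrite inNb => /andP[].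
have yU : y \in U by move: yN; rewrite inNb => /andP[].
have zW : z \in W by rewrite in_setD znot zU.
have k1 : (1 <= k)%N by rewrite -dv; apply: dg_pos; exact: nc.
have ltz : (dg W z < k)%N.
  rewrite -dz; apply: (dg_lt (y := y)) => //.
    by rewrite inNb yU hsym; move: zN; rewrite inNb => /andP[].
  by rewrite in_setD inNC yN orbT.
have dQ := d_Q R k k1.
case ccz: (cc W z).
  set m := dg W z.
  apply: le_trans (gain_ge0 WU nc (NC_sub zW)).
  set c : R := (m.+1%:R)^-1.
  set SF := \sum_(y in NC W z) FU U y.
  rewrite (eq_bigr (fun _ => c - c * SF)); last first.
    move=> x xC; rewrite /gw /avgF (cc_cc ccz xC) (cc_dg ccz xC) (cc_NC ccz xC).
    by rewrite card_NC.
  rewrite sumr_const card_NC -/m -mulr_natr mulrBl -mulrA [SF * _]mulrC mulrA.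
  rewrite /c mulVf ?pnatr_eq0 // mul1r.
  have hSF : SF <= m.+1%:R * dcoef R k.
    apply: (@le_trans _ _ (\sum_(y in NC W z) dcoef R k)).
      apply: ler_sum => x xC; rewrite /FU; apply: d_mono => //; apply: kmin.
      by apply: (fsubsetP WU); exact: NC_in xC.
    by rewrite sumr_const card_NC mulr_natl.
  have hm : m.+1%:R * dcoef R k <= k%:R * dcoef R k.
    by apply: ler_wpM2r; [exact: d_ge0 | rewrite ler_nat].
  have := @d_rec R k k1; lra.
apply: le_trans (gain_ge0 WU nc (_ : [set z] \subset W)); last by rewrite sub1set.
rewrite big_set1 /gw /avgF ccz /FU dz.
have p1 : (1 <= dg W z)%N by apply: dg_pos; rewrite ccz.
have k2 : (2 <= k)%N by apply: leq_ltn_trans ltz.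
have := d_conv R k k2.
have : dcoef R k.-1 <= dcoef R (dg W z).
  apply: d_mono => //; by rewrite -ltnS prednK.
lra.
Qed.


Lemma main_ind n U : (#|U| <= n)%N -> \sum_(x in U) gw U x <= (aU U)%:R.
Proof.
elim: n U => [|n IH] U cU.
  by move: cU; rewrite leqn0 => /eqP/cards0_eq ->; rewrite big_set0 ler0n.
have fin v : v \in U -> \sum_(x in U) gw U x <= 1 + \sum_(x in U :\: NC U v) gw (U :\: NC U v) x ->
    \sum_(x in U) gw U x <= (aU U)%:R.
  move=> vU h; apply: le_trans h _.
  have cW : (#|U :\: NC U v| <= n)%N.
    rewrite -ltnS; apply: leq_trans cU; apply: proper_card; apply/properP.
    by split; [exact: subsetDl | exists v => //; rewrite in_setD inNC eqxx].
  have := IH _ cW; have := aU_step vU; rewrite -(ler_nat R) -natr1 => h1 h2.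
  lra.
case: (boolP [exists v in U, cc U v]).
  by move=> /exists_inP[v vU ccv]; apply: (fin v vU); rewrite (caseA vU ccv).
move=> /exists_inP ncU.
have nc : noCC U by move=> x xU; apply/negP => ccx; apply: ncU; exists x.
case: (set_0Vmem U) => [->|[x0 x0U]]; first by rewrite big_set0 ler0n.
case: (arg_minnP (dg U) x0U) => v vU vmin.
set k := dg U v.
have kmin : forall x, x \in U -> (k <= dg U x)%N by move=> x xU; exact: vmin.
have k1 : (1 <= k)%N by apply: dg_pos; exact: nc.
have nonreg' w y : w \in U -> dg U w = k -> y \in Nb U w -> (k < dg U y)%N ->
    \sum_(x in U) gw U x <= (aU U)%:R.
  move=> wU dw yN lt; apply: (fin w wU); apply: (@stepB U w 0) => //.
    by rewrite addr0; exact: (nonreg nc wU dw kmin yN lt).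
  apply: le_trans (gain_ge0 (subsetDl U (NC U w)) nc (sub0set _)).
  by rewrite big_set0.
case: (boolP [exists y in Nb U v, (k < dg U y)%N]).
  by move=> /exists_inP[y yN lt]; exact: (nonreg' v y vU erefl yN lt).
move=> /exists_inP nlt.
have dN y : y \in Nb U v -> dg U y = k.
  move=> yN; apply/eqP; rewrite eqn_leq kmin ?andbT; last first.
    by move: yN; rewrite inNb => /andP[].
  by rewrite leqNgt; apply/negP => lt; apply: nlt; exists y.
have := nc v vU; rewrite /cc negb_forall_in => /exists_inP [y yN neq].
have yU : y \in U by move: yN; rewrite inNb => /andP[].
have : ~~ (NC U y \subset NC U v).
  apply/negP => sub; move: neq; rewrite eqEcard sub !card_NC (dN y yN) /= /k ltnS leqnn; by [].
move=> /fintype.subsetPn [z zNy znot].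
have zN : z \in Nb U y.
  move: zNy; rewrite inNC => /orP[/eqP zy|//].
  by move: znot; rewrite zy inNC yN orbT.
have zU : z \in U by move: zN; rewrite inNb => /andP[].
case: (ltnP k (dg U z)) => [lt|le].
  exact: (nonreg' y z yU (dN y yN) zN lt).
have dz : dg U z = k by apply/eqP; rewrite eqn_leq le kmin.
apply: (fin v vU); apply: (@stepB U v (dcoef R k - dcoef R k.+1)) => //.
  exact: NC_bound.
exact: (reg_gain nc vU erefl kmin yN zN znot dz).
Qed.

End Graph.

Lemma sum_by_degree (R : realType) (T : finType) (f : nat -> R) (dg : T -> nat) (D : nat) :
  (forall x, 1 <= dg x <= D)%N ->
  \sum_(1 <= i < D.+1) f i * (#|[set x | dg x == i]|)%:R = \sum_x f (dg x).
Proof.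
move=> hd.
have c i : (#|[set x | dg x == i]|)%:R = \sum_x (if dg x == i then 1 else 0) :> R.
  rewrite -big_mkcond /=.
  have -> : \sum_(x | dg x == i) (1 : R) = \sum_(x in [set x | dg x == i]) 1.
    by apply: eq_bigl => x; rewrite inE.
  by rewrite sumr_const.
under eq_bigr do rewrite c mulr_sumr.
rewrite exchange_big /=; apply: eq_bigr => x _.
have xin : dg x \in index_iota 1 D.+1 by rewrite mem_index_iota ltnS hd.
rewrite (bigD1_seq (dg x)) ?iota_uniq //= eqxx mulr1 big1 ?addr0 //.
by move=> i /negbTE; rewrite eq_sym => ->; rewrite mulr0.
Qed.

Theorem theorem5 (R : realType) (D : nat) (T : finType) (e : rel T) :
  (3 <= D)%N -> in_GD e D ->
  (\sum_(1 <= i < D.+1) dcoef R i * (#|V_ e i|)%:R <= (alpha e)%:R)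
  /\ dcoef R 1 = 1 - (expR 1)^-1
  /\ (forall i : nat, (1 <= i <= D.-1)%N ->
        dcoef R i.+1 = 1 - i%:R * dcoef R i).
Proof.
move=> D3 [[hsym eirr] [conn [[degD [x1 dx1]] ncomp]]].
split; last first.
  split; first exact: d_one.
  by move=> i /andP[i1 _]; exact: d_rec.
have degE x : deg e x = dg e [set: T] x.
  by rewrite /deg /dg; apply: eq_card => y; rewrite !inE.
have nc : noCC e [set: T].
  move=> x _; apply/negP => ccx.
  have cl : closed e (NC e [set: T] x).
    move=> a b eab; apply/idP/idP => aC.
      by rewrite -(cc_NC ccx aC) inNC inNb in_setT eab orbT.
    by rewrite -(cc_NC ccx aC) inNC inNb in_setT hsym eab orbT.
  have xC : x \in NC e [set: T] x by rewrite inNC eqxx.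
  have allC y : y \in NC e [set: T] x by rewrite -(closed_connect cl (conn x y)).
  apply: ncomp; split.
    have -> : #|T| = #|NC e [set: T] x|.
      apply/eqP; rewrite eqn_leq max_card andbT; apply: subset_leq_card.
      by apply/fintype.subsetP => y _; exact: allC.
    by rewrite (card_NC eirr) -(cc_dg eirr ccx (allC x1)) -degE dx1.
  move=> y z yz.
  have := allC z; rewrite -(cc_NC ccx (allC y)) inNC inNb in_setT.
  by rewrite eq_sym (negbTE yz).
have md x : (1 <= deg e x <= D)%N.
  by rewrite degD andbT degE; apply: dg_pos; apply: nc.
rewrite /V_ (@sum_by_degree R T (dcoef R) (deg e) D md).
have -> : alpha e = aU e [set: T].
  by rewrite /aU /alpha; apply: eq_bigl => S; rewrite unfold_in /indU subsetT.
apply: le_trans (main_ind R hsym eirr (leqnn #|[set: T]|)).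
rewrite le_eqVlt; apply/orP; left; apply/eqP; apply: eq_big => x; first by rewrite in_setT.
by move=> _; rewrite (gw_noCC R nc) ?in_setT // /FU degE.
Qed.
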